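(* The $3\times2\times3$ quaternion tensor $$T=\left(\begin{bmatrix}1&0&0\\0&1&0\\0&0&1\end{bmatrix};\begin{bmatrix}0&0&1\\0&1&0\\0&0&0\end{bmatrix}\right)$$ has $\mathrm{rank}(T)=4$.
   Context: $\mathbb{H}$ denotes the real quaternions. An $n_1\times n_2\times n_3$ quaternion tensor is an array $T=(T_{ijk})$ with entries in $\mathbb{H}$, $1\le i\le n_1$, $1\le j\le n_2$, $1\le k\le n_3$; it is written $T=(A_1;\dots;A_{n_2})$ where the frontal slice $A_j$ is the $n_1\times n_3$ matrix $(T_{ijk})_{i,k}$. A nonzero tensor is simple if $T_{ijk}=a_ib_jc_k$ (quaternion product in this order) for some $\vec a\in\mathbb{H}^{n_1},\vec b\in\mathbb{H}^{n_2},\vec c\in\mathbb{H}^{n_3}$. The rank of $T$ is the least number of simple tensors summing to $T$. *)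

(* Defs.v *)
From Stdlib Require Import Reals.
From mathcomp Require Import all_boot.
Set Implicit Arguments. Unset Strict Implicit. Unset Printing Implicit Defensive.

Record quat : Type := Quat { qre : R; qi : R; qj : R; qk : R }.

Definition qzero : quat := Quat R0 R0 R0 R0.
Definition qone  : quat := Quat R1 R0 R0 R0.

Definition qadd (p q : quat) : quat :=
  Quat (Rplus (qre p) (qre q)) (Rplus (qi p) (qi q))
       (Rplus (qj p) (qj q)) (Rplus (qk p) (qk q)).

(* Hamilton product: i^2 = j^2 = k^2 = ijk = -1. *)
Definition qmul (p q : quat) : quat :=
  let a1 := qre p in let b1 := qi p in let c1 := qj p in let d1 := qk p in
  let a2 := qre q in let b2 := qi q in let c2 := qj q in let d2 := qk q in
  Quat (Rminus (Rminus (Rminus (Rmult a1 a2) (Rmult b1 b2)) (Rmult c1 c2)) (Rmult d1 d2))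
       (Rminus (Rplus (Rplus (Rmult a1 b2) (Rmult b1 a2)) (Rmult c1 d2)) (Rmult d1 c2))
       (Rplus (Rplus (Rminus (Rmult a1 c2) (Rmult b1 d2)) (Rmult c1 a2)) (Rmult d1 b2))
       (Rplus (Rminus (Rplus (Rmult a1 d2) (Rmult b1 c2)) (Rmult c1 b2)) (Rmult d1 a2)).

Definition qtensor (n1 n2 n3 : nat) := 'I_n1 -> 'I_n2 -> 'I_n3 -> quat.

Definition simple_tensor n1 n2 n3 (T : qtensor n1 n2 n3) : Prop :=
  (exists i j k, T i j k <> qzero) /\
  exists (a : 'I_n1 -> quat) (b : 'I_n2 -> quat) (c : 'I_n3 -> quat),
    forall i j k, T i j k = qmul (qmul (a i) (b j)) (c k).

Definition sum_of_simple n1 n2 n3 (T : qtensor n1 n2 n3) (r : nat) : Prop :=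
  exists S : 'I_r -> qtensor n1 n2 n3,
    (forall l, simple_tensor (S l)) /\
    forall i j k, T i j k = \big[qadd/qzero]_(l < r) S l i j k.

Definition has_rank n1 n2 n3 (T : qtensor n1 n2 n3) (r : nat) : Prop :=
  sum_of_simple T r /\ forall r', (r' < r)%N -> ~ sum_of_simple T r'.

Definition qofb (b : bool) : quat := if b then qone else qzero.

(* The 3x2x3 tensor (A_1; A_2) with A_1 = I_3 and
   A_2 = [[0,0,1],[0,1,0],[0,0,0]]; frontal slice A_j has entries (i,k). *)
Definition T14 : qtensor 3 2 3 := fun i j k =>
  if (nat_of_ord j == 0)%N then qofb (nat_of_ord i == nat_of_ord k)
  else qofb (((nat_of_ord i == 0) && (nat_of_ord k == 2))
             || ((nat_of_ord i == 1) && (nat_of_ord k == 1)))%N.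

(* Main.v *)
From HB Require Import structures.
Require Import Defs.
From Stdlib Require Import Reals Lra Psatz.
From Stdlib Require Import IndefiniteDescription.
From mathcomp Require Import all_boot all_algebra.
From mathcomp Require Import Rstruct.



Lemma quat_ext p q : qre p = qre q -> qi p = qi q -> qj p = qj q -> qk p = qk q -> p = q.
Proof. by case: p q => ? ? ? ? [? ? ? ?] /= -> -> -> ->. Qed.

Definition sum3 (f : nat -> quat) := qadd (qadd (f 0) (f 1)) (f 2).
Definition mm (X W : nat -> nat -> quat) i k := sum3 (fun l => qmul (X i l) (W l k)).
Definition Idq (i k : nat) := qofb (i == k).
Definition Tn (i j k : nat) : quat :=
  if (j == 0)%N then qofb (i == k)
  else qofb (((i == 0) && (k == 2)) || ((i == 1) && (k == 1)))%N.

Ltac qring := apply: quat_ext; rewrite /= ?/mm ?/sum3 ?/qmul ?/qadd /=; ring.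

Lemma qmul0r q : qmul qzero q = qzero. Proof. qring. Qed.
Lemma qmulr0 q : qmul q qzero = qzero. Proof. qring. Qed.
Lemma qadd0r q : qadd qzero q = q. Proof. qring. Qed.
Lemma qaddr0 q : qadd q qzero = q. Proof. qring. Qed.
Lemma qmul1r q : qmul qone q = q. Proof. qring. Qed.

Definition qn (q : quat) : R := Rplus (Rplus (Rplus (Rmult (qre q) (qre q)) (Rmult (qi q) (qi q))) (Rmult (qj q) (qj q))) (Rmult (qk q) (qk q)).
Lemma qn_mul p q : qn (qmul p q) = Rmult (qn p) (qn q).
Proof. rewrite /qn /qmul /=; ring. Qed.
Lemma qn0 q : qn q = R0 -> q = qzero.
Proof.
rewrite /qn => H; apply: quat_ext => /=; nra.
Qed.
Lemma qmul_eq0 p q : qmul p q = qzero -> p = qzero \/ q = qzero.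
Proof.
move=> H; have: qn (qmul p q) = R0 by rewrite H /qn /=; ring.
rewrite qn_mul => /Rmult_integral [] /qn0; tauto.
Qed.
Lemma qone_neq0 : qone <> qzero.
Proof. move/(f_equal qre) => /=; lra. Qed.

Definition Lq (q : quat) (s t : nat) : R :=
  let a := qre q in let b := qi q in let c := qj q in let d := qk q in
  match s, t with
  | 0, 0 => a | 0, 1 => Ropp b | 0, 2 => Ropp c | 0, _ => Ropp d
  | 1, 0 => b | 1, 1 => a | 1, 2 => Ropp d | 1, _ => c
  | 2, 0 => c | 2, 1 => d | 2, 2 => a | 2, _ => Ropp b
  | _, 0 => d | _, 1 => Ropp c | _, 2 => b | _, _ => a
  end.

Definition blk (p : nat) : nat :=
  match p with 0|1|2|3 => 0 | 4|5|6|7 => 1 | _ => 2 end.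
Definition sub (p : nat) : nat :=
  match p with 0|4|8 => 0 | 1|5|9 => 1 | 2|6|10 => 2 | 3|7|11 => 3 | _ => 0 end.

Definition E (M : nat -> nat -> quat) : 'M[R]_12 :=
  \matrix_(p, q) Lq (M (blk p) (blk q)) (sub p) (sub q).

Lemma sub_cases p : [\/ sub p = 0, sub p = 1, sub p = 2 | sub p = 3].
Proof.
do 12 (case: p => [|p]; first by constructor).
by constructor.
Qed.

Lemma Emul X W : E (mm X W) = (E X *m E W)%R.
Proof.
apply/matrixP => p q; rewrite !mxE.
rewrite !big_ord_recr big_ord0 /= !mxE /=.
move: (blk p) (blk q) => i k.
rewrite /mm /sum3 /=.
case: (sub_cases p) => ->; case: (sub_cases q) => -> /=;
rewrite GRing.add0r -!RplusE -!RmultE -?RoppE /=; ring.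
Qed.

Lemma blk_lt p : blk p < 3.
Proof. by do 12 (case: p => [|p] //). Qed.

Lemma EId : E Idq = 1%:M%R.
Proof.
apply/matrixP => [[p Hp] [q Hq]]; rewrite !mxE /=.
do 12 (case: p Hp => [|p] Hp; [do 12 (case: q Hq => [|q] Hq; [rewrite /= ?Ropp_0; reflexivity|]); by []|]).
by [].
Qed.


Lemma blk_subE i s : i < 3 -> s < 4 -> blk (4 * i + s) = i /\ sub (4 * i + s) = s.
Proof. by case: i => [|[|[|i]]] //; case: s => [|[|[|[|s]]]]. Qed.

Lemma Ecomp M M' : E M = E M' -> forall i k, i < 3 -> k < 3 -> M i k = M' i k.
Proof.
move=> H i k Hi Hk.
have G : forall s, s < 4 -> Lq (M i k) s 0 = Lq (M' i k) s 0.
  move=> s Hs.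
  have Hp : 4 * i + s < 12.
    by case: i Hi => [|[|[|i]]] //; case: s Hs => [|[|[|[|s]]]].
  have Hq : 4 * k + 0 < 12 by case: k Hk => [|[|[|k]]].
  have := congr1 (fun A : 'M[R]_12 => A (Ordinal Hp) (Ordinal Hq)) H.
  rewrite /= !mxE /=.
  have [-> ->] := blk_subE _ _ Hi Hs; have [-> ->] := blk_subE _ 0 Hk isT.
  by [].
apply: quat_ext; [exact: (G 0 isT) | exact: (G 1 isT) | exact: (G 2 isT) | exact: (G 3 isT)].
Qed.

Lemma DF (X W : nat -> nat -> quat) :
  (forall i k, i < 3 -> k < 3 -> mm X W i k = Idq i k) ->
  forall i k, i < 3 -> k < 3 -> mm W X i k = Idq i k.
Proof.
move=> H.
have H1 : E (mm X W) = E Idq.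
  apply/matrixP => p q; rewrite !mxE H //; exact: blk_lt.
have H2 : (E X *m E W = 1%:M)%R by rewrite -Emul H1 EId.
have := mulmx1C H2; rewrite -Emul -EId => H3.
exact: Ecomp H3.
Qed.

Lemma core (A B C : nat -> nat -> quat) :
  (forall i j k, i < 3 -> j < 2 -> k < 3 ->
     Tn i j k = sum3 (fun l => qmul (qmul (A l i) (B l j)) (C l k))) -> False.
Proof.
move=> H.
pose X i l := A l i. pose W l k := qmul (B l 0) (C l k).
have XW : forall i k, i < 3 -> k < 3 -> mm X W i k = Idq i k.
  move=> i k Hi Hk; rewrite /Idq -[qofb _]/(Tn i 0 k) H // /X /W; qring.
have WX := DF X W XW.
pose P l m := sum3 (fun k => qmul (C l k) (A m k)).
have WXP : forall l m, mm W X l m = qmul (B l 0) (P l m) by move=> l m; rewrite /W /X /P; qring.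
have Pz : forall l m, l < 3 -> m < 3 -> l != m -> P l m = qzero.
  move=> l m Hl Hm Hlm.
  have := WX l l Hl Hl; rewrite WXP /Idq eqxx /= => H1.
  have := WX l m Hl Hm; rewrite WXP /Idq (negbTE Hlm) /= => /qmul_eq0 [] // H0.
  by move: H1; rewrite H0 qmul0r => /esym/qone_neq0.
have Nrow : forall i m, i < 3 -> m < 3 ->
   sum3 (fun k => qmul (Tn i 1 k) (A m k)) = sum3 (fun l => qmul (qmul (A l i) (B l 1)) (P l m)).
  move=> i m Hi Hm; rewrite /sum3 !H // /P; qring.
have A2 : forall m, m < 3 -> A m 2 = qzero.
  move=> m Hm.
  have E0 := Nrow 0 m isT Hm; have E2 := Nrow 2 m isT Hm.
  rewrite /sum3 /Tn /= ?qmul0r ?qadd0r ?qaddr0 ?qmul1r in E0 E2.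
  have [d [Hd0 Hd2]] : exists d, A m 2 = qmul (A m 0) d /\ qzero = qmul (A m 2) d.
    move: E0 E2.
    case: m Hm => [|[|[|m]]] Hm //= E0 E2.
    - rewrite ?(Pz 1 0) ?(Pz 2 0) // ?qmulr0 ?qaddr0 ?qadd0r in E0 E2.
      by exists (qmul (B 0 1) (P 0 0)); split; [rewrite {1}E0|rewrite {1}E2]; qring.
    - rewrite ?(Pz 0 1) ?(Pz 2 1) // ?qmulr0 ?qaddr0 ?qadd0r in E0 E2.
      by exists (qmul (B 1 1) (P 1 1)); split; [rewrite {1}E0|rewrite {1}E2]; qring.
    - rewrite ?(Pz 0 2) ?(Pz 1 2) // ?qmulr0 ?qaddr0 ?qadd0r in E0 E2.
      by exists (qmul (B 2 1) (P 2 2)); split; [rewrite {1}E0|rewrite {1}E2]; qring.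
  case: (qmul_eq0 _ _ (esym Hd2)) => // Hd.
  by rewrite Hd0 Hd qmulr0.
have := XW 2 2 isT isT.
rewrite /mm /sum3 /X !A2 // !qmul0r !qadd0r /Idq /= => /esym; exact: qone_neq0.
Qed.



Lemma qaddA : associative qadd. Proof. move=> ? ? ?; qring. Qed.
Lemma qaddC : commutative qadd. Proof. move=> ? ?; qring. Qed.
Lemma qadd0q : left_id qzero qadd. Proof. move=> ?; qring. Qed.
HB.instance Definition _ := Monoid.isComLaw.Build quat qzero qadd qaddA qaddC qadd0q.

Definition qa0 : 'I_3 -> 'I_2 -> 'I_3 -> quat := fun i j k => qzero.

Definition ta (l : nat) : qtensor 3 2 3 := fun i j k =>
  match l with
  | 0 => qofb ((nat_of_ord i == 1) && (nat_of_ord k == 1))%N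
  | 1 => if nat_of_ord j == 1 then qofb ((nat_of_ord i == 0) && ((nat_of_ord k == 0) || (nat_of_ord k == 2)))%N else qzero
  | 2 => if nat_of_ord j == 0 then qofb ((nat_of_ord i == 0) && (nat_of_ord k == 0))%N
         else (if ((nat_of_ord i == 0) && (nat_of_ord k == 0))%N then Quat (-1) 0 0 0 else qzero)
  | _ => if nat_of_ord j == 0 then qofb ((nat_of_ord i == 2) && (nat_of_ord k == 2))%N else qzero
  end.

Lemma upper : sum_of_simple T14 4.
Proof.
exists (fun l => ta l); split.
- move=> [l Hl]; split.
  + case: l Hl => [|[|[|[|l]]]] Hl //.
    * exists (inord 1), ord0, (inord 1); rewrite /ta /= !inordK //= => /(f_equal qre)/=; lra.
    * exists ord0, (inord 1), ord0; rewrite /ta /= !inordK //= => /(f_equal qre)/=; lra.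
    * exists ord0, ord0, ord0; rewrite /ta /= => /(f_equal qre)/=; lra.
    * exists (inord 2), ord0, (inord 2); rewrite /ta /= !inordK //= => /(f_equal qre)/=; lra.
  + case: l Hl => [|[|[|[|l]]]] Hl //.
    * exists (fun i => qofb (nat_of_ord i == 1)%N), (fun _ => qone), (fun k => qofb (nat_of_ord k == 1)%N).
      move=> [[|[|[|i]]] Hi] [[|[|j]] Hj] [[|[|[|k]]] Hk] //=; qring.
    * exists (fun i => qofb (nat_of_ord i == 0)%N), (fun j => qofb (nat_of_ord j == 1)%N), (fun k => qofb ((nat_of_ord k == 0) || (nat_of_ord k == 2))%N).
      move=> [[|[|[|i]]] Hi] [[|[|j]] Hj] [[|[|[|k]]] Hk] //=; qring.
    * exists (fun i => qofb (nat_of_ord i == 0)%N), (fun j => if nat_of_ord j == 0 then qone else Quat (-1) 0 0 0), (fun k => qofb (nat_of_ord k == 0)%N).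
      move=> [[|[|[|i]]] Hi] [[|[|j]] Hj] [[|[|[|k]]] Hk] //=; qring.
    * exists (fun i => qofb (nat_of_ord i == 2)%N), (fun j => qofb (nat_of_ord j == 0)%N), (fun k => qofb (nat_of_ord k == 2)%N).
      move=> [[|[|[|i]]] Hi] [[|[|j]] Hj] [[|[|[|k]]] Hk] //=; qring.
- move=> [[|[|[|i]]] Hi] [[|[|j]] Hj] [[|[|[|k]]] Hk] //=.
  all: rewrite !big_ord_recr big_ord0 /= /ta /T14 /=; qring.
Qed.


Lemma pad r (G : nat -> quat) : r < 4 -> (forall n, r <= n -> G n = qzero) ->
  \big[qadd/qzero]_(0 <= n < r) G n = sum3 G.
Proof.
move=> Hr Gz; rewrite /sum3.
case: r Hr Gz => [|[|[|[|r]]]] // _ Gz; rewrite /index_iota /= ?big_cons big_nil.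
- by rewrite !Gz //; qring.
- by rewrite !(Gz 1) ?(Gz 2) //; qring.
- by rewrite !(Gz 2) //; qring.
- by qring.
Qed.

Lemma lower r : r < 4 -> ~ sum_of_simple T14 r.
Proof.
move=> Hr [S [Hs HT]].
have [f Hf] : exists f : 'I_r -> ('I_3 -> quat) * ('I_2 -> quat) * ('I_3 -> quat),
    forall l i j k, S l i j k = qmul (qmul ((f l).1.1 i) ((f l).1.2 j)) ((f l).2 k).
  apply: (functional_choice (fun l abc => forall i j k, S l i j k = qmul (qmul (abc.1.1 i) (abc.1.2 j)) (abc.2 k))).
  move=> l; case: (Hs l) => _ [a [b [c H]]]; by exists (a, b, c).
pose A n i := if @insub _ (fun n => n < r) 'I_r n is Some l then (f l).1.1 (inord i) else qzero.
pose B n j := if @insub _ (fun n => n < r) 'I_r n is Some l then (f l).1.2 (inord j) else qzero.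
pose C n k := if @insub _ (fun n => n < r) 'I_r n is Some l then (f l).2 (inord k) else qzero.
apply: (core A B C) => i j k Hi Hj Hk.
rewrite /Tn; have := HT (inord i) (inord j) (inord k).
rewrite /T14 !inordK // => ->.
rewrite (eq_bigr (fun l : 'I_r => qmul (qmul (A l i) (B l j)) (C l k))); last first.
  by move=> l _; rewrite Hf /A /B /C valK.
rewrite -(big_mkord xpredT (fun n => qmul (qmul (A n i) (B n j)) (C n k))).
apply: pad => // n Hn.
by rewrite /A insubF ?qmul0r // ltnNge Hn.
Qed.

Theorem mainTheorem14 : has_rank T14 4.
Proof.
split; first exact: upper.
move=> r' Hr; exact: lower.
Qed.
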